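(* Let $G=(V,E)$ be a $k$-colorable chordal graph and let $T$ be a clique of $G$ such that $(G,T)$ is the join of $(G_1,T)$ and $(G_2,T)$. If one of $\mathcal{C}^c_k(G_1,T)$ and $\mathcal{C}^c_k(G_2,T)$ is an $(m,k)$-color-complete graph (for some $m$), then $\mathcal{C}^c_k(G,T)$ equals (up to label-preserving isomorphism) the other one. If both $\mathcal{C}^c_k(G_1,T)$ and $\mathcal{C}^c_k(G_2,T)$ are forests satisfying the injective neighborhood property, then $\mathcal{C}^c_k(G,T)$ is a forest satisfying the injective neighborhood property.
   Context: A chordal graph has no induced cycle of length $>3$. $(G,T)$ is the join of $(G_1,T)$ and $(G_2,T)$ if $G_1,G_2$ are induced subgraphs of $G$, $V(G_1)\cap V(G_2)=T$, $V(G_1)\cup V(G_2)=V(G)$, $V(G_1)\ne T\ne V(G_2)$, and every edge of $G$ lies in $G_1$ or $G_2$. A $k$-coloring of $G$ is a map $\alpha:V(G)\to\{1,\dots,k\}$ with $\alpha(u)\ne\alpha(w)$ for all edges $uw$. $\mathcal{C}_k(G)$ has the $k$-colorings as nodes, adjacent iff they differ on exactly one vertex. For $T\subseteq V(G)$, label each coloring $\gamma$ by $\gamma|_T$. A label component is a maximal set of colorings with the same label inducing a connected subgraph of $\mathcal{C}_k(G)$. The contracted solution graph $\mathcal{C}^c_k(G,T)=(H,\ell)$ has one node $x$ per label component $S_x$, distinct $x,y$ adjacent iff some $\gamma\in S_x,\gamma'\in S_y$ are adjacent in $\mathcal{C}_k(G)$, and $\ell(x)$ the common label on $S_x$. For $1\le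 m\le k$, a labeled graph $(H,\ell)$ is $(m,k)$-color-complete if there is a set $T$ with $|T|=m$ such that every label is a $k$-coloring of the complete graph on $T$, every such $k$-coloring is the label of exactly one node, and two nodes are adjacent iff their labels differ on exactly one element of $T$. $(H,\ell)$ satisfies the injective neighborhood property if any two distinct neighbors of any node have distinct labels. *)

(* Defs.v *)
From HB Require Import structures.
From mathcomp Require Import all_boot all_order.
Set Implicit Arguments. Unset Strict Implicit. Unset Printing Implicit Defensive.

(* A k-coloring of the induced subgraph G[S] (S : {set V}) is encoded as
   f : {ffun V -> option 'I_k} with f v = Some _ exactly for v \in S,
   and f u != f v for every edge uv inside S. *)

Notation pcol V k := {ffun V -> option 'I_k}.

Section Defs.
Variables (V : finType) (e : rel V) (k : nat).


Definition chordal : Prop :=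
  forall (x : V) (s : seq V), let c := x :: s in
    4 <= size c -> uniq c -> cycle e c ->
    exists i j, [&& i.+1 < j, j < size c,
                    ~~ ((i == 0) && (j == (size c).-1)) &
                    e (nth x c i) (nth x c j)].

Definition is_coloring (S : {set V}) (f : pcol V k) : bool :=
  [forall v, (f v == None) == (v \notin S)] &&
  [forall u, forall v, [&& u \in S, v \in S & e u v] ==> (f u != f v)].

Definition colorings (S : {set V}) : {set pcol V k} := [set f | is_coloring S f].

Definition k_colorable : Prop := exists f, is_coloring setT f.

Definition cadj (f g : pcol V k) : bool := #|[set v | f v != g v]| == 1.

Definition label (T : {set V}) (f : pcol V k) : pcol V k :=
  [ffun v => if v \in T then f v else None].

Definition same_label (T : {set V}) (X : {set pcol V k}) : bool :=
  [forall f in X, forall g in X, label T f == label T g].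

Definition induces_connected (X : {set pcol V k}) : bool :=
  [forall f in X, forall g in X,
     connect [rel a b | [&& a \in X, b \in X & cadj a b]] f g].

Definition is_lcomp (S T : {set V}) (X : {set pcol V k}) : bool :=
  [&& X != set0, X \subset colorings S, same_label T X, induces_connected X &
   [forall Y : {set pcol V k},
      [&& X \subset Y, Y \subset colorings S, same_label T Y &
          induces_connected Y] ==> (Y == X)]].

End Defs.

Record lgraph (L : eqType) := LGraph {
  lnode : finType;
  ladj : rel lnode;
  llab : lnode -> L }.

Section Contracted.
Variables (V : finType) (e : rel V) (k : nat).

Definition ccnode (S T : {set V}) := {X : {set pcol V k} | is_lcomp e S T X}.

Definition ccadj (S T : {set V}) : rel (ccnode S T) :=
  fun x y => (x != y) &&
    [exists f in val x, exists g in val y, cadj f g].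

Definition cclab (S T : {set V}) (x : ccnode S T) : pcol V k :=
  label T (odflt [ffun _ => None] [pick f in val x]).

Definition contracted (S T : {set V}) : lgraph (pcol V k) :=
  @LGraph _ (ccnode S T) (@ccadj S T) (@cclab S T).

Definition kcol_complete (T' : {set V}) (c : pcol V k) : bool :=
  [forall v, (c v == None) == (v \notin T')] &&
  [forall u, forall v, [&& u \in T', v \in T' & u != v] ==> (c u != c v)].

Definition color_complete (m : nat) (H : lgraph (pcol V k)) : Prop :=
  exists T' : {set V}, #|T'| = m /\
    (forall x : lnode H, kcol_complete T' (llab x)) /\
    (forall c, kcol_complete T' c -> exists! x : lnode H, llab x = c) /\
    (forall x y : lnode H, ladj x y = cadj (llab x) (llab y)).

End Contracted.

Definition lg_iso (L : eqType) (G H : lgraph L) : Prop :=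
  exists f : lnode G -> lnode H, bijective f /\
    (forall x y, ladj (f x) (f y) = ladj x y) /\
    (forall x, llab (f x) = llab x).

Definition forest (L : eqType) (H : lgraph L) : Prop :=
  forall c : seq (lnode H), 3 <= size c -> ~ ucycle (@ladj _ H) c.

Definition injective_nbhd (L : eqType) (H : lgraph L) : Prop :=
  forall x y z : lnode H, ladj x y -> ladj x z -> y != z -> llab y != llab z.

(* Main.v *)
Require Import Defs.
From mathcomp Require Import all_boot all_order zify.
Set Implicit Arguments. Unset Strict Implicit. Unset Printing Implicit Defensive.

Lemma connect_map (A B : finType) (r : rel A) (r' : rel B) (h : A -> B) (X : pred A) x y :
  (forall a b, X a -> r a b -> X b /\ connect r' (h a) (h b)) ->
  X x -> connect r x y -> connect r' (h x) (h y).
Proof.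
move=> H Hx /connectP [p pth ->]; elim: p x Hx pth => [|z p IH] x Hx /=.
  by rewrite connect0.
case/andP => rxz pth; have [Hz c] := H _ _ Hx rxz.
exact: connect_trans c (IH _ Hz pth).
Qed.

Lemma connect_inv (A : finType) (r : rel A) (P : pred A) x y :
  (forall a b, P a -> r a b -> P b) -> P x -> connect r x y -> P y.
Proof.
move=> H Hx /connectP [p pth ->]; elim: p x Hx pth => [|z p IH] x Hx //=.
case/andP => rxz pth; exact: IH (H _ _ Hx rxz) pth.
Qed.

Lemma hl1 i n : i.+2 < n.+2 -> i < n.+2. Proof. lia. Qed.
Lemma hl2 i n : i.+2 < n.+2 -> i < n.+1. Proof. lia. Qed.
Lemma hl3 i n : i.+2 < n.+2 -> n.+1 <= i.+2 -> i.+2 == n.+1. Proof. lia. Qed.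
Lemma hl4 i n : 2 < n.+1 -> i.+2 == n.+1 -> (i == 0) = false. Proof. lia. Qed.
Lemma hl5 i : (i == i.+2) = false. Proof. lia. Qed.
Lemma hl6 i n : i.+2 < n.+2 -> i.+1 < n.+1. Proof. lia. Qed.

Lemma nb_ucycle (A : eqType) (r : rel A) : irreflexive r -> forall p x, path r x p ->
  (forall i, i.+2 < (size p).+1 -> nth x (x :: p) i != nth x (x :: p) i.+2) ->
  uniq (x :: p) \/ exists c, 3 <= size c /\ ucycle r c.
Proof.
move=> irr; elim => [|y p IH] x /=; first by left.
case/andP => rxy pth nb.
have nb' : forall i, i.+2 < (size p).+1 -> nth y (y :: p) i != nth y (y :: p) i.+2.
  move=> i hi; have := nb i.+1 hi => /=.
  rewrite [nth x (y :: p) i](set_nth_default y) /=; last by move: hi; rewrite /=; lia.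
  rewrite [nth x p i.+1](set_nth_default y) //; by move: hi; rewrite /=; lia.
case: (IH y pth nb') => [u|]; last by right.
case xin: (x \in y :: p); first last.
  by left; move: u; rewrite /= => ->.
right; have pw : path r x (y :: p) by rewrite /= rxy.
have nbw : forall i, i.+2 < (size (y :: p)).+1 ->
   nth x (x :: (y :: p)) i != nth x (x :: (y :: p)) i.+2 by exact: nb.
move: (y :: p) pw nbw u xin => w pw nbw u xin.
case/splitPr: xin pw nbw u => p1 p2 pw nbw u.
exists (x :: p1); split; last first.
  rewrite /ucycle /= rcons_path; rewrite cat_path /= in pw; case/and3P: pw => -> -> _.
  by rewrite -cat_rcons cat_uniq rcons_uniq in u; case/andP: u => /andP [-> ->].
case: p1 pw nbw u => [|z [|z' p1]] //=.
  by rewrite irr.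
by move=> _ /(_ 0) /=; rewrite eqxx => /(_ isT).
Qed.

Section Gen.
Variables (V : finType) (e : rel V) (k : nat).
Implicit Types (S T : {set V}) (f g : pcol V k).

Lemma colP S f : reflect ((forall v, (f v == None) = (v \notin S)) /\
   (forall u v, u \in S -> v \in S -> e u v -> f u != f v)) (f \in colorings e k S).
Proof.
rewrite inE /is_coloring; apply: (iffP andP) => [[/forallP H1 /forallP H2]|[H1 H2]]; split.
- by move=> v; move/eqP: (H1 v).
- by move=> u v uS vS euv; move/forallP: (H2 u) => /(_ v); rewrite uS vS euv.
- by apply/forallP => v; rewrite H1.
- by apply/forallP => u; apply/forallP => v; apply/implyP => /and3P [? ? ?]; apply: H2.
Qed.

Lemma cadj_sym : symmetric (@cadj V k).
Proof. by move=> f g; rewrite /cadj; have -> : [set v | f v != g v] = [set v | g v != f v] by apply/setP => v; rewrite !inE eq_sym. Qed.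

Definition lrel S T : rel (pcol V k) := fun a b =>
  [&& a \in colorings e k S, b \in colorings e k S, label T a == label T b & cadj a b].

Lemma lrel_sym S T : symmetric (lrel S T).
Proof. by move=> a b; rewrite /lrel andbCA eq_sym cadj_sym. Qed.

Lemma lconn_sym S T a b : connect (lrel S T) a b = connect (lrel S T) b a.
Proof. exact: (sym_connect_sym (@lrel_sym S T)). Qed.

Definition lclass S T f := [set g | connect (lrel S T) f g].

Lemma lclass_col S T f g : f \in colorings e k S -> g \in lclass S T f ->
  g \in colorings e k S /\ label T g = label T f.
Proof.
move=> Hf; rewrite inE => c.
have := connect_inv (P := [pred a | (a \in colorings e k S) && (label T a == label T f)]) _ _ c.
have H : forall a b, (a \in colorings e k S) && (label T a == label T f) -> lrel S T a b ->
   (b \in colorings e k S) && (label T b == label T f).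
  move=> a b /andP [_ /eqP <-]; rewrite /lrel => /and4P [_ -> /eqP E _]; by rewrite E eqxx.
move/(_ H) => /=; rewrite Hf eqxx => /(_ isT) /andP [-> /eqP ->] //.
Qed.

Lemma lcomp_class S T f : f \in colorings e k S -> is_lcomp e S T (lclass S T f).
Proof.
move=> Hf; apply/and5P; split.
- by apply/set0Pn; exists f; rewrite inE connect0.
- by apply/subsetP => g /(lclass_col Hf) [].
- apply/forall_inP => g Hg; apply/forall_inP => h Hh.
  by rewrite (lclass_col Hf Hg).2 (lclass_col Hf Hh).2.
- apply/forall_inP => g Hg; apply/forall_inP => h Hh.
  have c : connect (lrel S T) g h.
    move: Hg Hh; rewrite !inE => Hg Hh.
    by apply: connect_trans Hh; rewrite lconn_sym.
  apply: (connect_map (h := id) (X := [pred a | a \in lclass S T f])) Hg c => a b /= aX ab; split.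
    by move: aX; rewrite !inE => aX; apply: connect_trans aX (connect1 ab).
  apply: connect1 => /=; rewrite aX /=.
  have -> : b \in lclass S T f by move: aX; rewrite !inE => aX; apply: connect_trans aX (connect1 ab).
  by case/and4P: ab.
- apply/forallP => Y; apply/implyP => /and4P [sub Ysub Ysl Yconn].
  rewrite eqEsubset sub andbT; apply/subsetP => g gY.
  have fY : f \in Y by apply: (subsetP sub); rewrite inE connect0.
  move/forall_inP: Yconn => /(_ f fY) /forall_inP /(_ g gY) c.
  rewrite inE; apply: (connect_map (h := id) (X := [pred a | a \in Y])) fY c => a b /= aY /and3P [_ bY ab].
  split => //; apply: connect1; rewrite /lrel (subsetP Ysub _ aY) (subsetP Ysub _ bY) ab andbT /=.
  by move/forall_inP: Ysl => /(_ a aY) /forall_inP /(_ b bY).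
Qed.

Lemma lcomp_eq S T X f : is_lcomp e S T X -> f \in X -> X = lclass S T f.
Proof.
case/and5P => _ Xsub Xsl Xconn Xmax fX.
have Hf := subsetP Xsub _ fX.
have /and5P [_ Csub Csl Cconn _] := lcomp_class T Hf.
have XC : X \subset lclass S T f.
  apply/subsetP => g gX.
  move/forall_inP: Xconn => /(_ f fX) /forall_inP /(_ g gX) c.
  rewrite inE; apply: (connect_map (h := id) (X := [pred a | a \in X])) fX c => a b /= aX /and3P [_ bX ab].
  split => //; apply: connect1; rewrite /lrel (subsetP Xsub _ aX) (subsetP Xsub _ bX) ab andbT /=.
  by move/forall_inP: Xsl => /(_ a aX) /forall_inP /(_ b bX).
move/forallP: Xmax => /(_ (lclass S T f)) /implyP.
by rewrite XC Csub Csl Cconn => /(_ isT) /eqP.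
Qed.


Lemma diff_label T f g v : [set w | f w != g w] = [set v] -> v \in T ->
  [set w | label T f w != label T g w] = [set v].
Proof.
move=> H vT; apply/setP => w; move/setP: H => /(_ w); rewrite !inE !ffunE.
case: ifP => // wT _; rewrite eqxx; apply/esym/eqP => wv; by rewrite wv vT in wT.
Qed.

Section Nodes.
Variables S T : {set V}.
Notation N := (ccnode e k S T).
Implicit Types (x y : N).

Definition rep (x : N) : pcol V k := odflt [ffun _ => None] [pick f in val x].

Lemma rep_in x : rep x \in val x.
Proof.
rewrite /rep; case: pickP => [f //|H].
move: (valP x) => /and5P [/set0Pn [f fx] _ _ _ _].
by move: (H f); rewrite fx.
Qed.

Lemma node_mem x f : f \in val x -> f \in colorings e k S /\ label T f = cclab x.
Proof.
have Hr : rep x \in colorings e k S.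
  by move: (valP x) => /and5P [_ /subsetP H _ _ _]; apply: H; apply: rep_in.
rewrite (lcomp_eq (valP x) (rep_in x)) => H; exact: lclass_col Hr H.
Qed.

Lemma node_eq x y f : f \in val x -> f \in val y -> x = y.
Proof. by move=> fx fy; apply: val_inj; rewrite (lcomp_eq (valP x) fx) (lcomp_eq (valP y) fy). Qed.

Lemma node_conn x f g : f \in val x -> g \in val x -> connect (lrel S T) f g.
Proof. by move=> fx; rewrite (lcomp_eq (valP x) fx) inE. Qed.

Lemma node_eq2 x y f g : f \in val x -> g \in val y -> connect (lrel S T) f g -> x = y.
Proof.
move=> fx gy c; have gx : g \in val x by rewrite (lcomp_eq (valP x) fx) inE.
exact: node_eq gx gy.
Qed.

Definition mknode f (Hf : f \in colorings e k S) : N :=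
  exist _ (lclass S T f) (lcomp_class T Hf).

Lemma mknode_in f Hf : f \in val (@mknode f Hf).
Proof. by rewrite inE connect0. Qed.

Lemma ccadj_sym : symmetric (@ccadj V e k S T).
Proof.
move=> x y; rewrite /ccadj eq_sym; congr (_ && _).
apply/exists_inP/exists_inP => -[f fx /exists_inP [g gy fg]]; exists g => //;
  by apply/exists_inP; exists f => //; rewrite cadj_sym.
Qed.

Lemma ccadj_T x y : ccadj x y -> exists f g v,
  [/\ f \in val x, g \in val y, [set w | f w != g w] = [set v] & v \in T].
Proof.
case/andP => xy /exists_inP [f fx /exists_inP [g gy fg]].
move: (fg); rewrite /cadj => /cards1P [v Hv]; exists f, g, v; split => //.
apply/negPn/negP => vT; case/negP: xy; apply/eqP; apply: (node_eq2 fx gy); apply: connect1.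
rewrite /lrel (node_mem fx).1 (node_mem gy).1 fg andbT /=.
apply/eqP/ffunP => w; rewrite !ffunE; case: ifP => // wT.
apply/eqP; apply: contraTT isT => fgw.
have : w \in [set w | f w != g w] by rewrite inE.
by rewrite Hv inE => /eqP wv; rewrite -wv wT in vT.
Qed.

End Nodes.
End Gen.

Section Join.
Variables (V : finType) (e : rel V) (k : nat) (T S1 S2 : {set V}).
Hypothesis HI : S1 :&: S2 = T.
Hypothesis HU : S1 :|: S2 = setT.
Hypothesis Hedge : forall u v, e u v -> (u \in S1) && (v \in S1) || (u \in S2) && (v \in S2).
Implicit Types (S : {set V}) (f g a b : pcol V k).
Local Notation col := (colorings e k).

Definition restr S f : pcol V k := [ffun v => if v \in S then f v else None].
Definition glue f g : pcol V k := [ffun v => if v \in S1 then f v else g v].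

Lemma TS1 : T \subset S1. Proof. by rewrite -HI subsetIl. Qed.
Lemma TS2 : T \subset S2. Proof. by rewrite -HI subsetIr. Qed.
Lemma notS1 v : v \notin S1 -> v \in S2.
Proof. move=> H; have : v \in S1 :|: S2 by rewrite HU inE.
by rewrite inE (negbTE H). Qed.
Lemma inT v : v \in S1 -> v \in S2 -> v \in T.
Proof. by move=> ? ?; rewrite -HI inE; apply/andP. Qed.

Lemma restr_col S f : f \in col setT -> restr S f \in col S.
Proof.
case/colP => H1 H2; apply/colP; split => [v|u v uS vS euv]; rewrite !ffunE.
  by case: ifP => vS //; rewrite H1 inE.
by rewrite uS vS; apply: H2; rewrite ?inE.
Qed.

Lemma label_restr S f : T \subset S -> label T (restr S f) = label T f.
Proof. by move=> /subsetP TS; apply/ffunP => v; rewrite !ffunE; case: ifP => // /TS ->. Qed.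

Lemma label_eqv f g v : label T f = label T g -> v \in T -> f v = g v.
Proof. by move/ffunP => /(_ v); rewrite !ffunE => H vT; rewrite vT in H. Qed.

Lemma glueE2 f g v : label T f = label T g -> v \in S2 -> glue f g v = g v.
Proof.
move=> L vS2; rewrite ffunE; case: ifP => // vS1.
by apply: label_eqv L _; apply: inT.
Qed.

Lemma glue_col f g : f \in col S1 -> g \in col S2 -> label T f = label T g -> glue f g \in col setT.
Proof.
case/colP => F1 F2 /colP [G1 G2] L; apply/colP; split => [v|u v _ _ euv].
  rewrite inE /=; case vS1: (v \in S1); first by rewrite ffunE vS1 F1 vS1.
  by rewrite glueE2 ?G1 ?notS1 ?vS1.
case/orP: (Hedge euv) => /andP [uS vS].
  by rewrite !ffunE uS vS; apply: F2.
by rewrite !glueE2 //; apply: G2.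
Qed.

Lemma restr_glue1 f g : f \in col S1 -> restr S1 (glue f g) = f.
Proof.
case/colP => F1 _; apply/ffunP => v; rewrite !ffunE; case: ifP => vS; first by rewrite vS.
by apply/esym/eqP; rewrite F1 vS.
Qed.

Lemma restr_glue2 f g : g \in col S2 -> label T f = label T g -> restr S2 (glue f g) = g.
Proof.
case/colP => G1 _ L; apply/ffunP => v; rewrite [LHS]ffunE; case: ifP => vS.
  exact: glueE2.
by apply/esym/eqP; rewrite G1 vS.
Qed.

Lemma glue_restr f : glue (restr S1 f) (restr S2 f) = f.
Proof.
apply/ffunP => v; rewrite !ffunE; case: ifP => vS1; first by rewrite vS1.
by rewrite notS1 ?vS1.
Qed.

Lemma label_glue f g : label T (glue f g) = label T f.
Proof. by apply/ffunP => v; rewrite !ffunE; case: ifP => // vT; rewrite (subsetP TS1 _ vT). Qed.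

Lemma proj_conn S f g : T \subset S -> connect (@lrel V e k setT T) f g ->
  connect (@lrel V e k S T) (restr S f) (restr S g).
Proof.
move=> TS; apply: (connect_map (X := predT)) => // a b _.
rewrite /lrel => /and4P [ac bc /eqP lab /cards1P [v Hv]]; split => //.
case vS: (v \in S).
  apply: connect1; rewrite /lrel !restr_col // !label_restr // lab eqxx /=.
  apply/cards1P; exists v; apply/setP => w; move/setP: Hv => /(_ w); rewrite !inE /restr !ffunE => H.
  case: ifP => wS; first exact: H.
  by apply/esym/eqP => wv; rewrite wv vS in wS.
have -> : restr S a = restr S b; last exact: connect0.
apply/ffunP => w; rewrite !ffunE; case: ifP => // wS.
move/setP: Hv => /(_ w); rewrite !inE.
have -> : (w == v) = false by apply/eqP => wv; rewrite wv vS in wS.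
by move/negbT; rewrite negbK => /eqP.
Qed.

Lemma conn_label S a b : connect (@lrel V e k S T) a b -> label T a = label T b.
Proof.
move=> c; apply/esym/eqP.
apply: (connect_inv (P := [pred x | label T x == label T a])) c => //= x y /eqP <-.
by rewrite /lrel => /and4P [_ _ /eqP -> _].
Qed.

Lemma lift_conn f g : f \in col setT -> g \in col setT ->
  connect (@lrel V e k S1 T) (restr S1 f) (restr S1 g) ->
  connect (@lrel V e k S2 T) (restr S2 f) (restr S2 g) ->
  connect (@lrel V e k setT T) f g.
Proof.
move=> Hf Hg c1 c2.
have lfg : label T f = label T g.
  by have := conn_label c1; rewrite !label_restr ?TS1.
have step1 : connect (@lrel V e k setT T) (glue (restr S1 f) (restr S2 f)) (glue (restr S1 g) (restr S2 f)).
  apply: (connect_map (h := fun a => glue a (restr S2 f)) (X := [pred a | label T a == label T f])) c1.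
    move=> a b /= /eqP la; rewrite /lrel => /and4P [ac bc /eqP lab cab]; split; first by rewrite -lab la.
    have l2 : label T (restr S2 f) = label T f by rewrite label_restr ?TS2.
    apply: connect1; rewrite /lrel !glue_col ?restr_col ?l2 -?lab ?la // !label_glue lab eqxx /=.
    move: cab; rewrite /cadj.
    have -> : [set w | glue a (restr S2 f) w != glue b (restr S2 f) w] = [set w | a w != b w] => //.
    apply/setP => w; rewrite !inE !ffunE; case: ifP => // wS.
    case/colP: ac => A _; case/colP: bc => B _.
    move: (A w) (B w); rewrite wS /= => /eqP -> /eqP ->; by rewrite !eqxx.
  by rewrite /= label_restr ?TS1.
have step2 : connect (@lrel V e k setT T) (glue (restr S1 g) (restr S2 f)) (glue (restr S1 g) (restr S2 g)).
  apply: (connect_map (h := fun b => glue (restr S1 g) b) (X := [pred a | label T a == label T g])) c2.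
    move=> a b /= /eqP la; rewrite /lrel => /and4P [ac bc /eqP lab cab]; split; first by rewrite -lab la.
    have l1 : label T (restr S1 g) = label T g by rewrite label_restr ?TS1.
    apply: connect1; rewrite /lrel !glue_col ?restr_col ?l1 -?lab ?la // !label_glue eqxx /=.
    move: cab; rewrite /cadj.
    have -> : [set w | glue (restr S1 g) a w != glue (restr S1 g) b w] = [set w | a w != b w] => //.
    apply/setP => w; rewrite !inE /glue /restr !ffunE; case wS: (w \in S1) => /=; rewrite ?eqxx //.
    case wS2 : (w \in S2).
      by rewrite (label_eqv lab) ?eqxx //; apply: inT.
    case/colP: ac => A _; case/colP: bc => B _.
    by move: (A w) (B w); rewrite wS2 /= => /eqP -> /eqP ->.
  by rewrite /= label_restr ?TS2 // -lfg.
by rewrite -(glue_restr f) -(glue_restr g); apply: connect_trans step1 step2.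
Qed.

Lemma diff_restr S f g v : [set w | f w != g w] = [set v] -> v \in S ->
  [set w | restr S f w != restr S g w] = [set v].
Proof.
move=> H vT; apply/setP => w; move/setP: H => /(_ w); rewrite !inE !ffunE.
case: ifP => // wT _; rewrite eqxx; apply/esym/eqP => wv; by rewrite wv vT in wT.
Qed.

Local Notation NG := (ccnode e k setT T).

Definition proj S (X : NG) : ccnode e k S T :=
  mknode T (restr_col S (node_mem (rep_in X)).1).

Implicit Types (X Y : NG).

Lemma proj_in S X f : T \subset S -> f \in val X -> restr S f \in val (proj S X).
Proof.
move=> TS fX; rewrite /= inE; apply: proj_conn TS _; exact: node_conn (rep_in X) fX.
Qed.

Lemma proj_lab S X : T \subset S -> cclab (proj S X) = cclab X.
Proof.
move=> TS; by rewrite -(node_mem (proj_in TS (rep_in X))).2 label_restr.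
Qed.

Lemma proj_inj X Y : proj S1 X = proj S1 Y -> proj S2 X = proj S2 Y -> X = Y.
Proof.
move=> E1 E2; apply: (node_eq2 (rep_in X) (rep_in Y)).
apply: lift_conn; first exact: (node_mem (rep_in X)).1.
- exact: (node_mem (rep_in Y)).1.
- apply: (node_conn (x := proj S1 Y)); last exact: proj_in TS1 (rep_in Y).
  by rewrite -E1; apply: proj_in TS1 (rep_in X).
- apply: (node_conn (x := proj S2 Y)); last exact: proj_in TS2 (rep_in Y).
  by rewrite -E2; apply: proj_in TS2 (rep_in X).
Qed.

Lemma proj_memb X f (Hf : f \in col setT) :
  restr S1 f \in val (proj S1 X) -> restr S2 f \in val (proj S2 X) -> f \in val X.
Proof.
move=> h1 h2; have E : mknode T Hf = X.
  apply: proj_inj.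
    exact: node_eq (proj_in TS1 (mknode_in T Hf)) h1.
  exact: node_eq (proj_in TS2 (mknode_in T Hf)) h2.
by rewrite -E (mknode_in T Hf).
Qed.

Lemma proj_adj S X Y : T \subset S -> ccadj X Y -> ccadj (proj S X) (proj S Y).
Proof.
move=> TS /ccadj_T [f [g [v [fX gY Hv vT]]]]; apply/andP; split.
  apply/eqP => E; have := proj_lab X TS; rewrite E proj_lab //.
  rewrite -(node_mem fX).2 -(node_mem gY).2 => /label_eqv /(_ vT) fgv.
  by move/setP: Hv => /(_ v); rewrite !inE fgv !eqxx.
apply/exists_inP; exists (restr S f); first exact: proj_in.
apply/exists_inP; exists (restr S g); first exact: proj_in.
apply/cards1P; exists v; apply: diff_restr Hv _; exact: (subsetP TS).
Qed.

Hypothesis Hcl : forall u v, u \in T -> v \in T -> u != v -> e u v.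

Lemma kc_label S f : T \subset S -> f \in col S -> kcol_complete T (label T f).
Proof.
move=> TS /colP [F1 F2]; apply/andP; split.
  apply/forallP => v; rewrite ffunE; case: ifP => vT; last by rewrite eqxx.
  by rewrite F1 (subsetP TS _ vT).
apply/forallP => u; apply/forallP => v; apply/implyP => /and3P [uT vT uv].
rewrite !ffunE uT vT; apply: F2; rewrite ?(subsetP TS) //; exact: Hcl.
Qed.

Lemma part1 m : color_complete m (contracted e k S1 T) -> (exists f : pcol V k, is_coloring e setT f) ->
  lg_iso (contracted e k setT T) (contracted e k S2 T).
Proof.
case=> T' [_ [Hlab [Hex Hadj]]] [f0 Hf0].
have Hf0' : f0 \in col setT by rewrite inE.
have TT' : T' = T.
  pose x0 := mknode T (restr_col S1 Hf0').
  have K1 := Hlab x0; rewrite /= in K1.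
  have K2 : kcol_complete T (cclab x0).
    by rewrite -(node_mem (rep_in x0)).2; apply: kc_label TS1 (node_mem (rep_in x0)).1.
  apply/setP => v; move/andP: K1 => [/forallP /(_ v) /eqP A _].
  move/andP: K2 => [/forallP /(_ v) /eqP B _]; by apply: negb_inj; rewrite -A -B.
rewrite TT' in Hex.
have kc1 : forall Z : ccnode e k S1 T, kcol_complete T (cclab Z).
  by move=> Z; rewrite -(node_mem (rep_in Z)).2; apply: kc_label TS1 (node_mem (rep_in Z)).1.
have kc2 : forall Z : ccnode e k S2 T, kcol_complete T (cclab Z).
  by move=> Z; rewrite -(node_mem (rep_in Z)).2; apply: kc_label TS2 (node_mem (rep_in Z)).1.
have Zex : forall Y : ccnode e k S2 T, exists Z : ccnode e k S1 T, cclab Z == cclab Y.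
  by move=> Y; case: (Hex _ (kc2 Y)) => Z [HZ _]; exists Z; apply/eqP.
have Zu : forall Z Z' : ccnode e k S1 T, cclab Z = cclab Z' -> Z = Z'.
  move=> Z Z' E; case: (Hex _ (kc1 Z)) => x [_ U].
  by rewrite -(U Z) // (U Z').
pose Z (Y : ccnode e k S2 T) := xchoose (Zex Y).
have ZP : forall Y : ccnode e k S2 T, cclab (Z Y) = cclab Y by move=> Y; apply/eqP; exact: xchooseP (Zex Y).
have gc : forall Y : ccnode e k S2 T, glue (rep (Z Y)) (rep Y) \in col setT.
  move=> Y; apply: glue_col; [exact: (node_mem (rep_in _)).1 | exact: (node_mem (rep_in _)).1|].
  exact: ZP Y.
pose q (Y : ccnode e k S2 T) := mknode T (gc Y).
have p2q : forall Y : ccnode e k S2 T, proj S2 (q Y) = Y.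
  move=> Y; have H := proj_in TS2 (mknode_in T (gc Y)).
  rewrite restr_glue2 in H; last exact: ZP Y; last exact: (node_mem (rep_in _)).1.
  exact: node_eq H (rep_in Y).
have p1q : forall Y : ccnode e k S2 T, proj S1 (q Y) = Z Y.
  move=> Y; have H := proj_in TS1 (mknode_in T (gc Y)).
  rewrite restr_glue1 in H; last exact: (node_mem (rep_in _)).1.
  exact: node_eq H (rep_in _).
exists (@proj S2); split; [exists q | split].
- move=> X; apply: proj_inj; last exact: p2q.
  by rewrite p1q; apply: Zu; rewrite ZP !proj_lab ?TS1 ?TS2.
- exact: p2q.
- move=> X Y /=; apply/idP/idP => [H|]; last exact: proj_adj TS2.
  case/ccadj_T: (H) => a [b [v [aX bY Hv vT]]].
  have adj1 : ccadj (proj S1 X) (proj S1 Y).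
    have := Hadj (proj S1 X) (proj S1 Y); rewrite /= => ->.
    rewrite !proj_lab ?TS1 // -(proj_lab X TS2) -(proj_lab Y TS2) -(node_mem aX).2 -(node_mem bY).2.
    by apply/cards1P; exists v; exact: diff_label Hv vT.
  case/ccadj_T: adj1 => a1 [b1 [v' [a1X b1Y Hv' v'T]]].
  have la : label T a1 = label T a.
    by rewrite (node_mem a1X).2 (node_mem aX).2 !proj_lab ?TS1 ?TS2.
  have lb : label T b1 = label T b.
    by rewrite (node_mem b1Y).2 (node_mem bY).2 !proj_lab ?TS1 ?TS2.
  have vv : v' = v by apply: set1_inj; rewrite -(diff_label Hv' v'T) -(diff_label Hv vT) la lb.
  subst v'.
  have gl1 := glue_col (node_mem a1X).1 (node_mem aX).1 la.
  have gl2 := glue_col (node_mem b1Y).1 (node_mem bY).1 lb.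
  apply/andP; split.
    by case/andP: H => neq _; apply: contraNneq neq => ->.
  apply/exists_inP; exists (glue a1 a).
    apply: (proj_memb gl1); first by rewrite restr_glue1 // (node_mem a1X).1.
    by rewrite restr_glue2 // (node_mem aX).1.
  apply/exists_inP; exists (glue b1 b).
    apply: (proj_memb gl2); first by rewrite restr_glue1 // (node_mem b1Y).1.
    by rewrite restr_glue2 // (node_mem bY).1.
  apply/cards1P; exists v; apply/setP => w; rewrite !inE /glue !ffunE; case wS: (w \in S1).
    by move/setP: Hv' => /(_ w); rewrite !inE.
  move/setP: Hv => /(_ w); rewrite !inE => ->.
    by move/setP: Hv' => /(_ w); rewrite !inE => _.
- by move=> X; apply: proj_lab TS2.
Qed.

Lemma inj_part : injective_nbhd (contracted e k S1 T) -> injective_nbhd (contracted e k S2 T) ->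
  injective_nbhd (contracted e k setT T).
Proof.
move=> I1 I2 X Y Z /= XY XZ YZ; apply/negP => /eqP lYZ.
have E : forall S, T \subset S -> injective_nbhd (contracted e k S T) -> proj S Y = proj S Z.
  move=> S TS I; apply/eqP/negPn/negP => ne.
  by move: (I _ _ _ (proj_adj TS XY) (proj_adj TS XZ) ne); rewrite /= !proj_lab // lYZ eqxx.
by move: YZ; rewrite (proj_inj (E _ TS1 I1) (E _ TS2 I2)) eqxx.
Qed.

Lemma forest_part : forest (contracted e k S1 T) -> injective_nbhd (contracted e k setT T) ->
  forest (contracted e k setT T).
Proof.
move=> F1 IG c sz /andP [cyc u].
case: c sz cyc u => [|x p] sz cyc u; first by [].
have irr1 : irreflexive (@ccadj V e k S1 T) by move=> y; rewrite /ccadj eqxx.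
pose h := @proj S1.
have cyc' : path (@ccadj V e k setT T) x (rcons p x) by exact: cyc.
have pth : path (@ccadj V e k S1 T) (h x) (map h (rcons p x)).
  by rewrite path_map; apply: sub_path cyc' => a b /=; exact: proj_adj TS1.
have nb : forall i, i.+2 < (size (map h (rcons p x))).+1 ->
    nth (h x) (h x :: map h (rcons p x)) i != nth (h x) (h x :: map h (rcons p x)) i.+2.
  move=> i; rewrite size_map size_rcons => hi.
  set s := x :: rcons p x.
  have Hs : h x :: map h (rcons p x) = map h s by [].
  have ss : size s = (size p).+2 by rewrite /= size_rcons.
  rewrite Hs (nth_map x); last by rewrite ss; apply: hl1 hi.
  rewrite (nth_map x); last by rewrite ss.
  have dist : nth x s i != nth x s i.+2.
    have -> : s = rcons (x :: p) x by [].
    rewrite !nth_rcons /=.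
    have hi1 : i < (size p).+1 by apply: hl2 hi.
    rewrite hi1; case: (ltnP i.+2 (size p).+1) => h2.
      by rewrite -[nth x p i.+1]/(nth x (x :: p) i.+2) (@nth_uniq _ x (x :: p) i i.+2 hi1 h2 u) hl5.
    rewrite (hl3 hi h2).
    by rewrite -[X in _ != X]/(nth x (x :: p) 0) (@nth_uniq _ x (x :: p) i 0 hi1 isT u) ?(hl4 sz (hl3 hi h2)).
  have a1 : ccadj (nth x s i.+1) (nth x s i).
    rewrite ccadj_sym; move/(pathP x): cyc' => /(_ i); rewrite size_rcons; apply; apply: hl2 hi.
  have a2 : ccadj (nth x s i.+1) (nth x s i.+2).
    move/(pathP x): cyc' => /(_ i.+1); rewrite size_rcons; apply; apply: hl6 hi.
  have := IG _ _ _ a1 a2 dist; rewrite /=; apply: contraNneq => E.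
  rewrite /h in E; by rewrite -(proj_lab _ TS1) -[cclab (nth x s i.+2)](proj_lab _ TS1) E.
case: (nb_ucycle irr1 pth nb) => [u'|[c' [sz' uc']]]; last exact: F1 c' sz' uc'.
by move: u'; rewrite /= map_f // mem_rcons mem_head.
Qed.

End Join.

Theorem lemma9 (V : finType) (e : rel V) (k : nat) (T S1 S2 : {set V}) :
  symmetric e -> irreflexive e ->
  chordal e -> k_colorable e k ->
  (forall u v, u \in T -> v \in T -> u != v -> e u v) ->
  (* (G,T) is the join of (G[S1],T) and (G[S2],T) *)
  S1 :&: S2 = T -> S1 :|: S2 = setT -> S1 != T -> S2 != T ->
  (forall u v, e u v -> (u \in S1) && (v \in S1) || (u \in S2) && (v \in S2)) ->
  ((forall m, 1 <= m <= k ->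
      (color_complete m (contracted e k S1 T) ->
         lg_iso (contracted e k setT T) (contracted e k S2 T)) /\
      (color_complete m (contracted e k S2 T) ->
         lg_iso (contracted e k setT T) (contracted e k S1 T))) /\
   (forest (contracted e k S1 T) -> injective_nbhd (contracted e k S1 T) ->
    forest (contracted e k S2 T) -> injective_nbhd (contracted e k S2 T) ->
    forest (contracted e k setT T) /\ injective_nbhd (contracted e k setT T))).
Proof.
move=> _ _ _ kc Hcl HI HU _ _ Hedge.
have HI' : S2 :&: S1 = T by rewrite setIC.
have HU' : S2 :|: S1 = setT by rewrite setUC.
have Hedge' : forall u v, e u v -> (u \in S2) && (v \in S2) || (u \in S1) && (v \in S1).
  by move=> u v /Hedge; rewrite orbC.
split.
  move=> m _; split => Hcc.
    exact: (part1 HI HU Hedge Hcl Hcc kc).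
  exact: (part1 HI' HU' Hedge' Hcl Hcc kc).
move=> F1 I1 F2 I2.
have IG := inj_part HI HU Hedge I1 I2.
split => //; exact: (forest_part HI F1 IG).
Qed.
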